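(* Let $n\ge 6$ and $0\le \tau\le n-5$, and let $\Gamma_{n,\tau}$ be the signed graph defined in the context. Then: (i) $\lambda_1(\Gamma_{n,\tau})\le \lambda_1(\Gamma_{n,0})=\lambda_1(\Gamma_{n,n-5})$, with equality if and only if $\tau\in\{0,n-5\}$; (ii) $\lambda_1(\Gamma_{n,0})>n-4$, and $\lambda_1(\Gamma_{n,0})$ equals the largest root of $\lambda^3-(n-6)\lambda^2-3(n-4)\lambda-n+3=0$.
   Context: A signed graph is a simple graph whose edges carry signs $\pm1$; its adjacency matrix has entry $\sigma(uv)$ for adjacent $u,v$ and $0$ otherwise, and $\lambda_1(\cdot)$ denotes the largest eigenvalue of this matrix. For integers $n\ge 6$ and $0\le\tau\le n-5$, $\Gamma_{n,\tau}$ is the signed graph with vertex set $\{v_1,v_2,v_3,v_5\}\cup X\cup Y$ (disjoint union), where $|X|=\tau$, $|Y|=n-4-\tau$, and $v_4\in Y$, whose edges are: $v_1v_2$ (the only negative edge); $v_2v_3$; $v_1v_5$; $v_1x$ for all $x\in X$; $v_5x$ for all $x\in X$; $v_5y$ and $v_3y$ for all $y\in Y$; and all edges among vertices of $X\cup Y$ (so $X\cup Y$ induces a complete graph). There are no other edges; in particular $v_2$ has degree $2$, $v_1$ has degree $\tau+2$, $v_3v_5$ is not an edge, and $v_1v_2v_3v_4v_5v_1$ is an induced cycle. All edges other than $v_1v_2$ are positive. *)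

(* Defs.v *)
From HB Require Import structures.
From mathcomp Require Import all_boot all_order all_algebra.
From mathcomp Require Import boolp classical_sets reals.
Set Implicit Arguments. Unset Strict Implicit. Unset Printing Implicit Defensive.
Import Order.TTheory GRing.Theory Num.Theory.
Local Open Scope ring_scope.

(* Vertex numbering of Gamma_{n,tau} on 'I_n:
   0 = v1, 1 = v2, 2 = v3, 3 = v5,
   X = {4, ..., 3 + tau}, Y = {4 + tau, ..., n - 1} (v4 is any element of Y,
   e.g. 4 + tau). *)
Definition inX (tau i : nat) : bool := (4 <= i)%N && (i < 4 + tau)%N.
Definition inY (tau i : nat) : bool := (4 + tau <= i)%N.
Definition inXY (i : nat) : bool := (4 <= i)%N.

Definition pos_edge_dir (tau i j : nat) : bool :=
  [|| (i == 1%N) && (j == 2%N),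
      (i == 0%N) && (j == 3%N),
      (i == 0%N) && inX tau j,
      (i == 3%N) && inX tau j,
      (i == 3%N) && inY tau j,
      (i == 2%N) && inY tau j
    | [&& inXY i, inXY j & i != j] ].

Definition pos_edge (tau i j : nat) : bool :=
  pos_edge_dir tau i j || pos_edge_dir tau j i.

Definition neg_edge (i j : nat) : bool :=
  ((i == 0%N) && (j == 1%N)) || ((i == 1%N) && (j == 0%N)).

Definition Gamma {R : ringType} (n tau : nat) : 'M[R]_n :=
  \matrix_(i < n, j < n)
    (if neg_edge i j then -1 else if pos_edge tau i j then 1 else 0).

Definition lambda1 {R : realType} {n : nat} (A : 'M[R]_n) : R :=
  sup [set a : R | eigenvalue A a].

Definition is_largest_root {R : realType} (p : {poly R}) (l : R) : Prop :=
  root p l /\ forall r : R, root p r -> r <= l.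

(* Main.v *)
Require Import Defs.
From HB Require Import structures.
From mathcomp Require Import all_boot all_order all_algebra.
From mathcomp Require Import boolp classical_sets reals.
From mathcomp Require Import ring lra.
Import Order.TTheory GRing.Theory Num.Theory.
Local Open Scope ring_scope.

Definition Fent {R : ringType} (tau i j : nat) : R :=
  (i == 0%N)%:R * ((j == 3%N)%:R + (inX tau j)%:R - (j == 1%N)%:R)
+ (i == 1%N)%:R * ((j == 2%N)%:R - (j == 0%N)%:R)
+ (i == 2%N)%:R * ((j == 1%N)%:R + (inY tau j)%:R)
+ (i == 3%N)%:R * ((j == 0%N)%:R + (inX tau j)%:R + (inY tau j)%:R)
+ (inX tau i)%:R * ((j == 0%N)%:R + (j == 3%N)%:R + (inXY j)%:R)
+ (inY tau i)%:R * ((j == 2%N)%:R + (j == 3%N)%:R + (inXY j)%:R)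
- (i == j)%:R * (inXY j)%:R.

Lemma entry_eq (R : comRingType) (tau i j : nat) :
  (if neg_edge i j then -1 else if pos_edge tau i j then 1 else 0) = Fent (R:=R) tau i j.
Proof.
have L4 : forall k, (4 <= k.+4)%N = true by [].
have EX : forall k, (k.+4 < 4 + tau)%N = (k < tau)%N by move=> k; rewrite addnC addn4.
have EY : forall k, (4 + tau <= k.+4)%N = ~~ (k < tau)%N by move=> k; rewrite -EX ltnNge negbK.
rewrite /Fent /neg_edge /pos_edge /pos_edge_dir /inX /inY /inXY.
case: i => [|[|[|[|i]]]]; case: j => [|[|[|[|j]]]].
all: rewrite ?L4 ?EX ?EY /= ?eqSS 1?[(j == i)%N]eq_sym.
all: try case: (i < tau)%N; try case: (j < tau)%N; try case: (i == j)%N; rewrite /=; ring.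
Qed.

Definition sv {R : ringType} {n} (v : 'rV[R]_n) (P : pred nat) : R :=
  \sum_(i < n) v 0 i * (P i)%:R.

Lemma sv_ord (R : ringType) n (v : 'rV[R]_n) (j : 'I_n) :
  \sum_(i < n) v 0 i * (nat_of_ord i == nat_of_ord j)%:R = v 0 j.
Proof.
rewrite (bigD1 j) //= eqxx mulr1 big1 ?addr0 // => i Hij.
by rewrite (negbTE (Hij : (nat_of_ord i != nat_of_ord j))) mulr0.
Qed.

Definition colF {R : ringType} {n} tau (v : 'rV[R]_n) (j : nat) : R :=
   sv v (pred1 0%N) * ((j == 3%N)%:R + (inX tau j)%:R - (j == 1%N)%:R)
 + sv v (pred1 1%N) * ((j == 2%N)%:R - (j == 0%N)%:R)
 + sv v (pred1 2%N) * ((j == 1%N)%:R + (inY tau j)%:R)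
 + sv v (pred1 3%N) * ((j == 0%N)%:R + (inX tau j)%:R + (inY tau j)%:R)
 + sv v (inX tau) * ((j == 0%N)%:R + (j == 3%N)%:R + (inXY j)%:R)
 + sv v (inY tau) * ((j == 2%N)%:R + (j == 3%N)%:R + (inXY j)%:R).

Lemma col_formula (R : comRingType) n tau (v : 'rV[R]_n) (j : 'I_n) :
  (v *m Gamma n tau) 0 j = colF tau v j - v 0 j * (inXY (nat_of_ord j))%:R.
Proof.
rewrite !mxE.
pose A0 : R := ((nat_of_ord j == 3%N)%:R + (inX tau (nat_of_ord j))%:R - (nat_of_ord j == 1%N)%:R).
pose A1 : R := ((nat_of_ord j == 2%N)%:R - (nat_of_ord j == 0%N)%:R).
pose A2 : R := ((nat_of_ord j == 1%N)%:R + (inY tau (nat_of_ord j))%:R).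
pose A3 : R := ((nat_of_ord j == 0%N)%:R + (inX tau (nat_of_ord j))%:R + (inY tau (nat_of_ord j))%:R).
pose A4 : R := ((nat_of_ord j == 0%N)%:R + (nat_of_ord j == 3%N)%:R + (inXY (nat_of_ord j))%:R).
pose A5 : R := ((nat_of_ord j == 2%N)%:R + (nat_of_ord j == 3%N)%:R + (inXY (nat_of_ord j))%:R).
pose A6 : R := (inXY (nat_of_ord j))%:R.
rewrite (eq_bigr (fun i : 'I_n => v 0 i * (nat_of_ord i == 0%N)%:R * A0 + v 0 i * (nat_of_ord i == 1%N)%:R * A1
   + v 0 i * (nat_of_ord i == 2%N)%:R * A2 + v 0 i * (nat_of_ord i == 3%N)%:R * A3
   + v 0 i * (inX tau i)%:R * A4 + v 0 i * (inY tau i)%:R * A5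
   - v 0 i * (nat_of_ord i == nat_of_ord j)%:R * A6)); last first.
  by move=> i _; rewrite mxE entry_eq /Fent /A0 /A1 /A2 /A3 /A4 /A5 /A6; ring.
rewrite sumrB !big_split /= -!mulr_suml sv_ord.
by rewrite /colF /sv.
Qed.
From mathcomp Require Import zify.

Lemma smallF (j : nat) : (4 <= j)%N ->
  [/\ (j == 0%N) = false, (j == 1%N) = false, (j == 2%N) = false & (j == 3%N) = false].
Proof. by move=> H; split; apply/negbTE/eqP; lia. Qed.


Lemma col0 (R : comRingType) n tau (v : 'rV[R]_n) (j : 'I_n) : nat_of_ord j = 0%N ->
  (v *m Gamma n tau) 0 j = - sv v (pred1 1%N) + sv v (pred1 3%N) + sv v (inX tau).
Proof. by move=> Hj; rewrite col_formula /colF Hj /inX /inY /inXY /=; ring. Qed.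
Lemma col1 (R : comRingType) n tau (v : 'rV[R]_n) (j : 'I_n) : nat_of_ord j = 1%N ->
  (v *m Gamma n tau) 0 j = - sv v (pred1 0%N) + sv v (pred1 2%N).
Proof. by move=> Hj; rewrite col_formula /colF Hj /inX /inY /inXY /=; ring. Qed.
Lemma col2 (R : comRingType) n tau (v : 'rV[R]_n) (j : 'I_n) : nat_of_ord j = 2%N ->
  (v *m Gamma n tau) 0 j = sv v (pred1 1%N) + sv v (inY tau).
Proof. by move=> Hj; rewrite col_formula /colF Hj /inX /inY /inXY /=; ring. Qed.
Lemma col3 (R : comRingType) n tau (v : 'rV[R]_n) (j : 'I_n) : nat_of_ord j = 3%N ->
  (v *m Gamma n tau) 0 j = sv v (pred1 0%N) + sv v (inX tau) + sv v (inY tau).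
Proof. by move=> Hj; rewrite col_formula /colF Hj /inX /inY /inXY /=; ring. Qed.
Lemma colX (R : comRingType) n tau (v : 'rV[R]_n) (j : 'I_n) : inX tau j ->
  (v *m Gamma n tau) 0 j = sv v (pred1 0%N) + sv v (pred1 3%N) + sv v (inX tau) + sv v (inY tau) - v 0 j.
Proof.
move=> Hj; have /andP[H4 H5] := Hj.
have [h0 h1 h2 h3] := smallF _ H4.
have hY : inY tau j = false by rewrite /inY leqNgt H5.
have hXY : inXY j = true by [].
rewrite col_formula /colF /= h0 h1 h2 h3 Hj hY hXY /=; ring.
Qed.
Lemma colY (R : comRingType) n tau (v : 'rV[R]_n) (j : 'I_n) : inY tau j ->
  (v *m Gamma n tau) 0 j = sv v (pred1 2%N) + sv v (pred1 3%N) + sv v (inX tau) + sv v (inY tau) - v 0 j.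
Proof.
move=> Hj; have H4 : (4 <= j)%N by move: Hj; rewrite /inY; lia.
have [h0 h1 h2 h3] := smallF _ H4.
have hX : inX tau j = false by move: Hj; rewrite /inX /inY; lia.
have hXY : inXY j = true by [].
rewrite col_formula /colF /= h0 h1 h2 h3 Hj hX hXY /=; ring.
Qed.

Lemma sum_ind (R : ringType) (P : pred nat) n a b : (a <= b)%N -> (b <= n)%N ->
  (forall i, (i < n)%N -> P i = (a <= i < b)%N) -> \sum_(i < n) ((P i)%:R : R) = (b - a)%:R.
Proof.
move=> Hab Hbn HP.
rewrite -(big_mkord (fun _ => true) (fun i => ((P i)%:R : R))) (big_cat_nat (n:=a)) //=; last by apply: leq_trans Hbn.
rewrite (big_cat_nat (m:=a) (n:=b)) //=.
have E1 : \sum_(0 <= i < a) ((P i)%:R : R) = 0.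
  rewrite big_nat_cond big1 // => i /andP[/andP[_ Hi] _].
  rewrite HP; first by rewrite leqNgt Hi.
  exact: leq_trans Hi (leq_trans Hab Hbn).
have E3 : \sum_(b <= i < n) ((P i)%:R : R) = 0.
  rewrite big_nat_cond big1 // => i /andP[/andP[Hi Hin] _]; by rewrite HP // ltnNge Hi andbF.
have E2 : \sum_(a <= i < b) ((P i)%:R : R) = (b - a)%:R.
  rewrite (eq_big_nat _ _ (F2 := fun _ => 1)); first by rewrite sumr_const_nat.
  move=> i Hi; rewrite HP ?Hi //; case/andP: Hi => _ Hi; exact: leq_trans Hi Hbn.
by rewrite E1 E2 E3 add0r addr0.
Qed.

Lemma sumX (R : ringType) n tau : (4 + tau <= n)%N ->
  \sum_(i < n) ((inX tau i)%:R : R) = tau%:R.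
Proof. by move=> H; rewrite (@sum_ind _ (inX tau) n 4 (4+tau)) ?leq_addr // addKn. Qed.

Lemma sumY (R : ringType) n tau : (4 + tau <= n)%N ->
  \sum_(i < n) ((inY tau i)%:R : R) = (n - (4 + tau))%:R.
Proof. by move=> H; rewrite (@sum_ind _ (inY tau) n (4+tau) n) // => i Hi; rewrite /inY Hi andbT. Qed.

Lemma sv_row_pred1 (R : ringType) n (f : nat -> R) (c : nat) : (c < n)%N ->
  sv (\row_(i < n) f i) (pred1 c) = f c.
Proof.
by move=> Hc; rewrite /sv (@sv_ord R n _ (Ordinal Hc)) mxE.
Qed.

Lemma sv_row_const (R : comRingType) n (f : nat -> R) (P : pred nat) x :
  (forall i, P i -> f i = x) ->
  sv (\row_(i < n) f i) P = x * \sum_(i < n) ((P i)%:R : R).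
Proof.
move=> H; rewrite /sv mulr_sumr; apply: eq_bigr => i _; rewrite mxE.
by case E: (P i); [rewrite H | rewrite !mulr0].
Qed.

Definition cub {R : ringType} (nn a : R) : R :=
  a ^+ 3 - (nn - 6) * a ^+ 2 - 3 * (nn - 4) * a - (nn - 3).
Definition Dp {R : ringType} (t m a : R) : R :=
  (a + 1) * (a ^+ 2 - a - 1) * cub (t + m + 4) a + t * (m - 1) * a * (a + 1) * (2 * a + 1).

Lemma core (R : idomainType) (a t m w0 w1 w2 w3 sx sy : R) :
  (-w1 + w3 + sx - a*w0) = 0 ->
  (-w0 + w2 - a*w1) = 0 ->
  (w1 + sy - a*w2) = 0 ->
  (w0 + sx + sy - a*w3) = 0 ->
  (t*(w0+w3+sx+sy) - (a+1)*sx) = 0 ->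
  (m*(w2+w3+sx+sy) - (a+1)*sy) = 0 ->
  Dp t m a != 0 -> [/\ w0 = 0, w1 = 0, w2 = 0 & w3 = 0] /\ (sx = 0 /\ sy = 0).
Proof.
move=> E0 E1 E2 E3 E4 E5 HD.
have h0 : Dp t m a * w0 = 0.
  have -> : Dp t m a * w0 = (- a^+5 + a^+4 * t + a^+4 * m - 2 * a^+4 + 2 * a^+3 * t + 3 * a^+3 * m - a^+2 * t * m + a^+2 * m + 2 * a^+2 - a * t * m - 2 * a * t - 2 * a * m + a - t - m) * (-w1 + w3 + sx - a*w0) + (a^+4 - a^+3 * t - a^+3 * m + 2 * a^+3 - 2 * a^+2 * t - 3 * a^+2 * m + a^+2 - a * t - 3 * a * m - m) * (-w0 + w2 - a*w1) + (a^+3 - a^+2 * t * m - a^+2 * t - 2 * a^+2 * m + 2 * a^+2 - a * t * m - 2 * a * t - 3 * a * m + a - t - m) * (w1 + sy - a*w2) + (- a^+4 + a^+3 * m - 2 * a^+3 + 2 * a^+2 * m + a * m + 2 * a + 1) * (w0 + sx + sy - a*w3) + (- a^+4 + a^+3 * m - 2 * a^+3 + 2 * a^+2 * m + a * m + 2 * a + 1) * (t*(w0+w3+sx+sy) - (a+1)*sx) + (- a^+3 * t - a^+3 - a^+2 * t + 2 * a + 1) * (m*(w2+w3+sx+sy) - (a+1)*sy) by rewrite /Dp /cub; ring.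
  by rewrite E0 E1 E2 E3 E4 E5 !mulr0 !addr0.
move/eqP: h0; rewrite mulf_eq0 (negbTE HD) /= => /eqP h0.
have h1 : Dp t m a * w1 = 0.
  have -> : Dp t m a * w1 = (a^+4 - a^+3 * t - a^+3 * m + 2 * a^+3 - 2 * a^+2 * t - 3 * a^+2 * m + a^+2 - a * t - 3 * a * m - m) * (-w1 + w3 + sx - a*w0) + (- a^+5 + a^+4 * t + a^+4 * m - 2 * a^+4 + 3 * a^+3 * t + 3 * a^+3 * m - 2 * a^+2 * t * m + 3 * a^+2 * t + a^+2 * m + 2 * a^+2 - 3 * a * t * m + a * t - 2 * a * m + a - t * m - m) * (-w0 + w2 - a*w1) + (- a^+4 + a^+3 * t + a^+3 * m - 2 * a^+3 + 3 * a^+2 * t + 2 * a^+2 * m + 3 * a * t + a * m + 2 * a + t + 1) * (w1 + sy - a*w2) + (a^+3 - 2 * a^+2 * m + 2 * a^+2 - 3 * a * m + a - m) * (w0 + sx + sy - a*w3) + (a^+3 - 2 * a^+2 * m + 2 * a^+2 - 3 * a * m + a - m) * (t*(w0+w3+sx+sy) - (a+1)*sx) + (- a^+3 + 2 * a^+2 * t + 3 * a * t + 2 * a + t + 1) * (m*(w2+w3+sx+sy) - (a+1)*sy) by rewrite /Dp /cub; ring.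
  by rewrite E0 E1 E2 E3 E4 E5 !mulr0 !addr0.
move/eqP: h1; rewrite mulf_eq0 (negbTE HD) /= => /eqP h1.
have h2 : Dp t m a * w2 = 0.
  have -> : Dp t m a * w2 = (a^+3 - a^+2 * t * m - a^+2 * t - 2 * a^+2 * m + 2 * a^+2 - a * t * m - 2 * a * t - 3 * a * m + a - t - m) * (-w1 + w3 + sx - a*w0) + (- a^+4 + a^+3 * t + a^+3 * m - 2 * a^+3 + 3 * a^+2 * t + 2 * a^+2 * m + 3 * a * t + a * m + 2 * a + t + 1) * (-w0 + w2 - a*w1) + (- a^+5 + a^+4 * t + a^+4 * m - 2 * a^+4 + 3 * a^+3 * t + 2 * a^+3 * m + a^+3 - a^+2 * t * m + 2 * a^+2 * t - a^+2 * m + 4 * a^+2 - a * t * m - a * t - 3 * a * m + 2 * a - t - m) * (w1 + sy - a*w2) + (- a^+3 * m - a^+2 * m + a^+2 + 2 * a + 1) * (w0 + sx + sy - a*w3) + (- a^+3 * m - a^+2 * m + a^+2 + 2 * a + 1) * (t*(w0+w3+sx+sy) - (a+1)*sx) + (- a^+4 + a^+3 * t - a^+3 + 2 * a^+2 * t + 2 * a^+2 + a * t + 3 * a + 1) * (m*(w2+w3+sx+sy) - (a+1)*sy) by rewrite /Dp /cub; ring.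
  by rewrite E0 E1 E2 E3 E4 E5 !mulr0 !addr0.
move/eqP: h2; rewrite mulf_eq0 (negbTE HD) /= => /eqP h2.
have h3 : Dp t m a * w3 = 0.
  have -> : Dp t m a * w3 = (- a^+4 + a^+3 * m - 2 * a^+3 + 2 * a^+2 * m + a * m + 2 * a + 1) * (-w1 + w3 + sx - a*w0) + (a^+3 - 2 * a^+2 * m + 2 * a^+2 - 3 * a * m + a - m) * (-w0 + w2 - a*w1) + (- a^+3 * m - a^+2 * m + a^+2 + 2 * a + 1) * (w1 + sy - a*w2) + (- a^+5 + a^+4 * t + a^+4 * m - 2 * a^+4 + 2 * a^+3 * t + 2 * a^+3 * m + a^+3 - 2 * a^+2 * t * m - a^+2 * t - a^+2 * m + 4 * a^+2 - a * t * m - 3 * a * t - 3 * a * m + 2 * a - t - m) * (w0 + sx + sy - a*w3) + (- a^+4 - 2 * a^+3 + 2 * a^+2 * m + a^+2 + a * m + 3 * a + 1) * (t*(w0+w3+sx+sy) - (a+1)*sx) + (- a^+4 - a^+3 + 2 * a^+2 + 3 * a + 1) * (m*(w2+w3+sx+sy) - (a+1)*sy) by rewrite /Dp /cub; ring.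
  by rewrite E0 E1 E2 E3 E4 E5 !mulr0 !addr0.
move/eqP: h3; rewrite mulf_eq0 (negbTE HD) /= => /eqP h3.
have h4 : Dp t m a * sx = 0.
  have -> : Dp t m a * sx = (- a^+4 * t + a^+3 * t * m - 2 * a^+3 * t + 2 * a^+2 * t * m + a * t * m + 2 * a * t + t) * (-w1 + w3 + sx - a*w0) + (a^+3 * t - 2 * a^+2 * t * m + 2 * a^+2 * t - 3 * a * t * m + a * t - t * m) * (-w0 + w2 - a*w1) + (- a^+3 * t * m - a^+2 * t * m + a^+2 * t + 2 * a * t + t) * (w1 + sy - a*w2) + (- a^+4 * t - 2 * a^+3 * t + 2 * a^+2 * t * m + a^+2 * t + a * t * m + 3 * a * t + t) * (w0 + sx + sy - a*w3) + (- a^+5 + a^+4 * m - a^+4 + 2 * a^+3 * m + 3 * a^+3 - 3 * a^+2 * m + 3 * a^+2 - 4 * a * m - a - m - 1) * (t*(w0+w3+sx+sy) - (a+1)*sx) + (- a^+4 * t - a^+3 * t + 2 * a^+2 * t + 3 * a * t + t) * (m*(w2+w3+sx+sy) - (a+1)*sy) by rewrite /Dp /cub; ring.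
  by rewrite E0 E1 E2 E3 E4 E5 !mulr0 !addr0.
move/eqP: h4; rewrite mulf_eq0 (negbTE HD) /= => /eqP h4.
have h5 : Dp t m a * sy = 0.
  have -> : Dp t m a * sy = (- a^+3 * t * m - a^+3 * m - a^+2 * t * m + 2 * a * m + m) * (-w1 + w3 + sx - a*w0) + (- a^+3 * m + 2 * a^+2 * t * m + 3 * a * t * m + 2 * a * m + t * m + m) * (-w0 + w2 - a*w1) + (- a^+4 * m + a^+3 * t * m - a^+3 * m + 2 * a^+2 * t * m + 2 * a^+2 * m + a * t * m + 3 * a * m + m) * (w1 + sy - a*w2) + (- a^+4 * m - a^+3 * m + 2 * a^+2 * m + 3 * a * m + m) * (w0 + sx + sy - a*w3) + (- a^+4 * m - a^+3 * m + 2 * a^+2 * m + 3 * a * m + m) * (t*(w0+w3+sx+sy) - (a+1)*sx) + (- a^+5 + a^+4 * t - a^+4 + 2 * a^+3 * t + 3 * a^+3 - a^+2 * t + 3 * a^+2 - 3 * a * t - a - t - 1) * (m*(w2+w3+sx+sy) - (a+1)*sy) by rewrite /Dp /cub; ring.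
  by rewrite E0 E1 E2 E3 E4 E5 !mulr0 !addr0.
move/eqP: h5; rewrite mulf_eq0 (negbTE HD) /= => /eqP h5.
by [].
Qed.

Lemma sv_pred1 (R : ringType) n (v : 'rV[R]_n) c (Hc : (c < n)%N) :
  sv v (pred1 c) = v 0 (Ordinal Hc).
Proof. rewrite /sv; exact: (@sv_ord _ _ v (Ordinal Hc)). Qed.

Lemma sum_rel (R : comRingType) n (v : 'rV[R]_n) (P : pred nat) (b K : R) :
  (forall j : 'I_n, P j -> b * v 0 j = K) ->
  b * sv v P = K * \sum_(i < n) ((P i)%:R : R).
Proof.
move=> H; rewrite /sv mulr_sumr mulr_sumr; apply: eq_bigr => i _.
by case E: (P i); [rewrite mulr1 mulr1 H | rewrite !mulr0].
Qed.

Lemma eig_cases (R : fieldType) n tau (a : R) : (4 + tau <= n)%N ->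
  eigenvalue (Gamma n tau) a -> a = -1 \/ Dp tau%:R (n - (4 + tau))%:R a = 0.
Proof.
move=> Hn /eigenvalueP [v Hv Hnz].
have col j : (v *m Gamma n tau) 0 j = a * v 0 j by rewrite Hv mxE.
have H0 : (0 < n)%N by lia.
have H1 : (1 < n)%N by lia.
have H2 : (2 < n)%N by lia.
have H3 : (3 < n)%N by lia.
set w0 := sv v (pred1 0%N).
set w1 := sv v (pred1 1%N).
set w2 := sv v (pred1 2%N).
set w3 := sv v (pred1 3%N).
set sx := sv v (inX tau).
set sy := sv v (inY tau).
have E0 : -w1 + w3 + sx - a*w0 = 0.
  by rewrite -(@col0 _ _ tau v (Ordinal H0)) // col /w0 (@sv_pred1 _ _ v _ H0) subrr.
have E1 : -w0 + w2 - a*w1 = 0.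
  by rewrite -(@col1 _ _ tau v (Ordinal H1)) // col /w1 (@sv_pred1 _ _ v _ H1) subrr.
have E2 : w1 + sy - a*w2 = 0.
  by rewrite -(@col2 _ _ tau v (Ordinal H2)) // col /w2 (@sv_pred1 _ _ v _ H2) subrr.
have E3 : w0 + sx + sy - a*w3 = 0.
  by rewrite -(@col3 _ _ tau v (Ordinal H3)) // col /w3 (@sv_pred1 _ _ v _ H3) subrr.
have EX : forall j : 'I_n, inX tau j -> (a + 1) * v 0 j = w0 + w3 + sx + sy.
  move=> j Hj; have := col j; rewrite colX // => h.
  by rewrite mulrDl mul1r -h subrK.
have EY : forall j : 'I_n, inY tau j -> (a + 1) * v 0 j = w2 + w3 + sx + sy.
  move=> j Hj; have := col j; rewrite colY // => h.
  by rewrite mulrDl mul1r -h subrK.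
have E4 : tau%:R * (w0+w3+sx+sy) - (a+1)*sx = 0.
  by rewrite /sx (@sum_rel _ _ v _ _ _ EX) sumX // mulrC subrr.
have E5 : (n - (4 + tau))%:R * (w2+w3+sx+sy) - (a+1)*sy = 0.
  by rewrite /sy (@sum_rel _ _ v _ _ _ EY) sumY // mulrC subrr.
case: (eqVneq a (-1)) => [->|Ha]; first by left.
case: (eqVneq (Dp tau%:R (n - (4 + tau))%:R a) 0) => [->|HD]; first by right.
exfalso; move: Hnz; apply/negP; rewrite negbK.
have [[z0 z1 z2 z3] [zx zy]] := @core _ _ _ _ _ _ _ _ _ _ E0 E1 E2 E3 E4 E5 HD.
have Ha1 : a + 1 != 0 by rewrite addr_eq0.
apply/eqP/rowP => j; rewrite !mxE.
case Ej: (nat_of_ord j) => [|[|[|[|k]]]].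
- by rewrite -(@sv_ord _ _ v j) Ej.
- by rewrite -(@sv_ord _ _ v j) Ej.
- by rewrite -(@sv_ord _ _ v j) Ej.
- by rewrite -(@sv_ord _ _ v j) Ej.
have Hj : (4 <= j)%N by rewrite Ej.
case E: (inX tau j).
- have := EX j E; rewrite z0 z3 zx zy !addr0 => /eqP; rewrite mulf_eq0 (negbTE Ha1) /=.
  by move/eqP.
- have HY : inY tau j by move: E Hj; rewrite /inX /inY; lia.
  have := EY j HY; rewrite z2 z3 zx zy !addr0 => /eqP; rewrite mulf_eq0 (negbTE Ha1) /=.
  by move/eqP.
Qed.

Lemma eq_from (R : comRingType) (c k A B : R) : c = 0 -> A - B = k * c -> A = B.
Proof. by move=> -> ; rewrite mulr0 => /eqP; rewrite subr_eq0 => /eqP. Qed.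

Definition f0 {R : ringType} (nn l : R) (i : nat) : R :=
  if i == 0%N then nn - 4 else if i == 1%N then nn - 4
  else if i == 2%N then (nn - 4) * (1 + l) else if i == 3%N then (nn - 4) * (1 + l)
  else l ^+ 2 + l - 1.

Lemma eig_tau0 (R : realFieldType) n (l : R) : (6 <= n)%N -> cub n%:R l = 0 ->
  eigenvalue (Gamma n 0) l.
Proof.
move=> Hn Hc; apply/eigenvalueP.
pose v := \row_(i < n) f0 n%:R l i.
have H0 : (0 < n)%N by lia.
have H1 : (1 < n)%N by lia.
have H2 : (2 < n)%N by lia.
have H3 : (3 < n)%N by lia.
have Hn4 : (4 + 0 <= n)%N by lia.
have hw0 : sv v (pred1 0%N) = n%:R - 4 by rewrite sv_row_pred1.
have hw1 : sv v (pred1 1%N) = n%:R - 4 by rewrite sv_row_pred1.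
have hw2 : sv v (pred1 2%N) = (n%:R - 4) * (1 + l) by rewrite sv_row_pred1.
have hw3 : sv v (pred1 3%N) = (n%:R - 4) * (1 + l) by rewrite sv_row_pred1.
have hsx : sv v (inX 0) = 0.
  by rewrite (@sv_row_const _ _ _ _ 0) ?mul0r // => i; rewrite /inX addn0; lia.
have hsy : sv v (inY 0) = (l ^+ 2 + l - 1) * (n%:R - 4).
  rewrite (@sv_row_const _ _ _ _ (l ^+ 2 + l - 1)) ?sumY // ?addn0 ?natrB //.
  move=> i; rewrite /inY addn0 => Hi; have [h0 h1 h2 h3] := smallF _ Hi.
  by rewrite /f0 h0 h1 h2 h3.
exists v; last first.
  apply/negP => /eqP /rowP /(_ (Ordinal H0)); rewrite !mxE /f0 /= => /eqP.
  rewrite subr_eq0 => /eqP Hn4'.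
  have : (n%:R : R) = 4%:R by [].
  by move/eqP; rewrite eqr_nat; lia.
apply/rowP => j; rewrite [in RHS]mxE [in RHS]mxE.
case Ej: (nat_of_ord j) => [|[|[|[|k]]]].
- rewrite col0 // hw1 hw3 hsx /f0 /=; ring.
- rewrite col1 // hw0 hw2 /f0 /=; ring.
- rewrite col2 // hw1 hsy /f0 /=; ring.
- rewrite col3 // hw0 hsx hsy /f0 /=; ring.
have HY : inY 0 j by rewrite /inY Ej.
rewrite colY // hw2 hw3 hsx hsy mxE Ej /f0 /=.
apply: (@eq_from _ _ (-1) _ _ Hc); rewrite /cub; ring.
Qed.

Definition f5 {R : ringType} (tt l : R) (tau i : nat) : R :=
  if i == 0%N then - tt * (l + 1) ^+ 2 else if i == 1%N then tt * (l + 1)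
  else if i == 2%N then - tt * (l + 1) else if i == 3%N then - tt * (l ^+ 2 + 3 * l + 1)
  else if inX tau i then - l ^+ 3 - l ^+ 2 + 3 * l + 2
  else - tt * (l + 1) ^+ 2.

Lemma eig_tau5 (R : realFieldType) n (l : R) : (6 <= n)%N -> 0 < l -> cub n%:R l = 0 ->
  eigenvalue (Gamma n (n - 5)) l.
Proof.
move=> Hn Hl Hc; apply/eigenvalueP.
set tt : R := n%:R - 5.
pose v := \row_(i < n) f5 tt l (n - 5) i.
have H0 : (0 < n)%N by lia.
have H1 : (1 < n)%N by lia.
have H2 : (2 < n)%N by lia.
have H3 : (3 < n)%N by lia.
have Hn4 : (4 + (n - 5) <= n)%N by lia.
have Htt : (n - 5)%:R = tt by rewrite natrB //; lia.
have hw0 : sv v (pred1 0%N) = - tt * (l + 1) ^+ 2 by rewrite sv_row_pred1.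
have hw1 : sv v (pred1 1%N) = tt * (l + 1) by rewrite sv_row_pred1.
have hw2 : sv v (pred1 2%N) = - tt * (l + 1) by rewrite sv_row_pred1.
have hw3 : sv v (pred1 3%N) = - tt * (l ^+ 2 + 3 * l + 1) by rewrite sv_row_pred1.
have hsx : sv v (inX (n - 5)) = (- l ^+ 3 - l ^+ 2 + 3 * l + 2) * tt.
  rewrite (@sv_row_const _ _ _ _ (- l ^+ 3 - l ^+ 2 + 3 * l + 2)) ?sumX ?Htt //.
  move=> i Hi; have /andP[Hi4 _] := Hi; have [h0 h1 h2 h3] := smallF _ Hi4.
  by rewrite /f5 h0 h1 h2 h3 Hi.
have hsy : sv v (inY (n - 5)) = - tt * (l + 1) ^+ 2.
  rewrite (@sv_row_const _ _ _ _ (- tt * (l + 1) ^+ 2)) ?sumY //.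
    by rewrite (_ : (n - (4 + (n - 5)))%N = 1%N) ?mulr1 //; lia.
  move=> i Hi; have Hi4 : (4 <= i)%N by move: Hi; rewrite /inY; lia.
  have [h0 h1 h2 h3] := smallF _ Hi4.
  have hX : inX (n - 5) i = false by move: Hi; rewrite /inX /inY; lia.
  by rewrite /f5 h0 h1 h2 h3 hX.
exists v; last first.
  apply/negP => /eqP /rowP /(_ (Ordinal H1)); rewrite !mxE /f5 /= => /eqP.
  rewrite mulf_eq0 => /orP[].
    rewrite /tt subr_eq0 => /eqP Hn5; have : (n%:R : R) = 5%:R by [].
    by move/eqP; rewrite eqr_nat; lia.
  move=> /eqP H; have : 0 < l + 1 by lra.
  by rewrite H ltxx.
apply/rowP => j; rewrite [in RHS]mxE [in RHS]mxE.
case Ej: (nat_of_ord j) => [|[|[|[|k]]]].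
- rewrite col0 // hw1 hw3 hsx /f5 /=; rewrite /tt; ring.
- rewrite col1 // hw0 hw2 /f5 /=; ring.
- rewrite col2 // hw1 hsy /f5 /=; ring.
- rewrite col3 // hw0 hsx hsy /f5 /=; rewrite /tt; ring.
have Hj4 : (4 <= j)%N by rewrite Ej.
have [h0 h1 h2 h3] := smallF _ Hj4.
case HX: (inX (n - 5) j).
  rewrite colX // hw0 hw3 hsx hsy mxE /f5 -!Ej h0 h1 h2 h3 HX.
  apply: (@eq_from _ _ (l + 1) _ _ Hc); rewrite /cub /tt; ring.
have HY : inY (n - 5) j by move: HX Hj4; rewrite /inX /inY; lia.
rewrite colY // hw2 hw3 hsx hsy mxE /f5 -!Ej h0 h1 h2 h3 HX /tt; ring.
Qed.

Definition cpoly {R : ringType} (n : nat) : {poly R} :=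
  'X^3 - (n%:R - 6) *: 'X^2 - (3 * (n%:R - 4)) *: 'X - (n%:R - 3)%:P.

Lemma cpolyE (R : comRingType) n (x : R) : (cpoly n).[x] = cub n%:R x.
Proof. rewrite /cpoly /cub !hornerE; ring. Qed.

Lemma cub_mono (R : realFieldType) (N x y : R) : 6 <= N -> N - 4 <= x -> x < y ->
  cub N x < cub N y.
Proof.
have [k ->] : exists k, N = k + 4 by exists (N - 4); ring.
move=> HN Hx Hxy.
have -> : cub (k + 4) y = cub (k + 4) x + (y - x) * (y ^+ 2 + x * y + x ^+ 2 - (k - 2) * (x + y) - 3 * k).
  rewrite /cub; ring.
rewrite ltrDl; apply: mulr_gt0; first by rewrite subr_gt0.
have Hk : 2 <= k by lra.
have Hx' : k <= x by lra.
have Hy : k <= y by lra.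
have h1 : 0 <= (x - k) * x by apply: mulr_ge0; lra.
have h2 : 0 <= (y - k) * y by apply: mulr_ge0; lra.
have h3 : 0 <= (x - k) * y + k * (y - k) by apply: addr_ge0; apply: mulr_ge0; lra.
have h4 : 0 < k * k + k by nra.
nra.
Qed.

Lemma cub_root (R : realType) n : (6 <= n)%N ->
  exists l : R, [/\ n%:R - 4 < l, cub n%:R l = 0 &
     forall x, n%:R - 4 <= x -> (x < l -> cub n%:R x < 0) /\ (l < x -> 0 < cub n%:R x)].
Proof.
move=> Hn.
have HN : (6 : R) <= n%:R by rewrite (ler_nat R 6 n).
have c1 : cub n%:R (n%:R - 4) < 0 :> R.
  have -> : cub n%:R (n%:R - 4) = - ((n%:R - 4) ^+ 2 + (n%:R - 3)) :> R by rewrite /cub; ring.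
  rewrite oppr_lt0; nra.
have c2 : 0 < cub n%:R n%:R :> R.
  have -> : cub n%:R n%:R = 3 * n%:R ^+ 2 + 11 * n%:R + 3 :> R by rewrite /cub; ring.
  nra.
have hab : n%:R - 4 <= n%:R :> R by lra.
have hc : ((cpoly (R:=R) n).[n%:R - 4] <= 0 <= (cpoly (R:=R) n).[n%:R]).
  by rewrite !cpolyE; apply/andP; split; lra.
have [l /andP[l1 l2] Hr] := @poly_ivt R (cpoly n) _ _ hab hc.
have Hl : cub n%:R l = 0 by rewrite -cpolyE; apply/eqP.
have l1' : n%:R - 4 < l.
  rewrite lt_neqAle l1 andbT; apply/negP => /eqP E.
  by move: c1; rewrite E Hl ltxx.
exists l; split => // x Hx; split => Hxl.
- by rewrite -Hl; apply: cub_mono.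
- by rewrite -Hl; apply: cub_mono => //; lra.
Qed.

Lemma roots_fin (R : realType) : forall k (p : {poly R}), (size p <= k)%N -> p != 0 ->
  exists s : seq R, forall x, root p x -> x \in s.
Proof.
elim => [|k IH] p Hs Hp.
  by move: Hp; rewrite -size_poly_eq0; move: Hs; rewrite leqn0 => ->.
case: (pselect (exists x, root p x)) => [[r Hr]|Hno]; last first.
  by exists [::] => x Hx; exfalso; apply: Hno; exists x.
have [q Hq] := factor_theorem p r Hr.
have Hq0 : q != 0 by apply: contraNneq Hp => Hq0; rewrite Hq Hq0 mul0r.
have Hsq : (size q <= k)%N.
  move: Hs; rewrite Hq size_Mmonic ?monicXsubC // size_XsubC addn2 /=.
  by [].
have [s Hs'] := IH q Hsq Hq0.
exists (r :: s) => x; rewrite Hq rootM root_XsubC in_cons => /orP[/Hs' ->|->];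
  by rewrite ?orbT.
Qed.

Lemma fin_below (R : realType) (s : seq R) (l : R) :
  exists M, M < l /\ forall x, x \in s -> x < l -> x <= M.
Proof.
elim: s => [|y s [M [HM H]]].
  by exists (l - 1); split => //; lra.
case: (ltP y l) => Hy.
- exists (Num.max M y); split; first by rewrite gt_max HM Hy.
  move=> x; rewrite in_cons => /orP[/eqP ->|Hx] Hxl; first by rewrite le_max lexx orbT.
  by rewrite le_max H.
- exists M; split => // x; rewrite in_cons => /orP[/eqP ->|Hx] Hxl; first by lra.
  exact: H.
Qed.

Lemma sup_eq (R : realType) (E : set R) (l : R) : E l -> (forall a, E a -> a <= l) -> sup E = l.
Proof.
move=> El H; apply/eqP; rewrite eq_le; apply/andP; split.
- by apply: ge_sup; [exists l | move=> a /H].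
- by apply: ub_le_sup => //; exists l => a /H.
Qed.

Lemma sup_lt (R : realType) (E : set R) (p : {poly R}) (l : R) : p != 0 ->
  (forall a, E a -> root p a) -> (forall a, E a -> a < l) -> 0 < l -> sup E < l.
Proof.
move=> Hp Hr Hl Hl0.
have [s Hs] := @roots_fin R _ p (leqnn (size p)) Hp.
have [M [HM HMs]] := @fin_below R s l.
case: (pselect (exists x, E x)) => [[x Ex]|Hno].
- apply: le_lt_trans HM; apply: ge_sup; first by exists x.
  by move=> a Ea; apply: HMs; [apply: Hs; apply: Hr | apply: Hl].
- have -> : E = set0.
    by apply/seteqP; split => x //= Ex; apply: Hno; exists x.
  by rewrite sup0.
Qed.

Lemma eig_bound (R : realType) n tau (l a : R) : (6 <= n)%N -> (tau <= n - 5)%N ->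
  n%:R - 4 < l -> cub n%:R l = 0 ->
  (forall x, n%:R - 4 <= x -> l < x -> 0 < cub n%:R x) ->
  eigenvalue (Gamma n tau) a -> a <= l /\ ((0 < tau)%N -> (tau < n - 5)%N -> a < l).
Proof.
move=> Hn Ht Hl Hc Hpos Ha.
have HN : (6 : R) <= n%:R by rewrite (ler_nat R 6 n).
have H4 : (4 + tau <= n)%N by lia.
have [Ea|HD] := @eig_cases R n tau a H4 Ha.
  by rewrite Ea; split => [|_ _]; lra.
set t : R := tau%:R. set m : R := (n - (4 + tau))%:R.
have Etm : t + m + 4 = n%:R by rewrite /t /m natrB // natrD; ring.
have Ht0 : 0 <= t by rewrite /t ler0n.
have Hm1 : 1 <= m by rewrite /m (ler_nat R 1); lia.
suff key : l <= a -> (0 < t * (m - 1) \/ l < a) -> False.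
  split.
    by rewrite leNgt; apply/negP => Hla; apply: key; [lra | right].
  move=> Ht1 Ht2; rewrite ltNge; apply/negP => Hla; apply: key => //; left.
  have : 1 <= t by rewrite /t (ler_nat R 1).
  have : 2 <= m by rewrite /m (ler_nat R 2); lia.
  by move=> *; nra.
move=> Hla Hor.
have Ha2 : 2 < a by lra.
have P1 : 0 < (a + 1) * (a ^+ 2 - a - 1) by apply: mulr_gt0; nra.
have Q : 0 < a * (a + 1) * (2 * a + 1) by apply: mulr_gt0; [apply: mulr_gt0|]; lra.
have Cge : 0 <= cub n%:R a.
  case: (eqVneq a l) => [->|Hne]; first by rewrite Hc.
  by apply/ltW/Hpos; lra.
have E : Dp t m a = (a + 1) * (a ^+ 2 - a - 1) * cub n%:R a + (t * (m - 1)) * (a * (a + 1) * (2 * a + 1)).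
  by rewrite /Dp Etm; ring.
move: HD; rewrite E; apply/eqP.
case: Hor => [Htm|Hla'].
- have A : 0 <= (a + 1) * (a ^+ 2 - a - 1) * cub n%:R a by apply: mulr_ge0 => //; apply: ltW.
  have B : 0 < (t * (m - 1)) * (a * (a + 1) * (2 * a + 1)) by apply: mulr_gt0.
  by rewrite gt_eqF //; lra.
- have A : 0 < (a + 1) * (a ^+ 2 - a - 1) * cub n%:R a by apply: mulr_gt0 => //; apply: Hpos; lra.
  have B : 0 <= (t * (m - 1)) * (a * (a + 1) * (2 * a + 1)).
    by apply: mulr_ge0; [apply: mulr_ge0; lra | apply: ltW].
  by rewrite gt_eqF //; lra.
Qed.

Theorem lemma2p2 (R : realType) (n tau : nat) :
  (6 <= n)%N -> (tau <= n - 5)%N ->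
  (* (i) *)
  (lambda1 (Gamma (R := R) n tau) <= lambda1 (Gamma (R := R) n 0)
   /\ lambda1 (Gamma (R := R) n 0) = lambda1 (Gamma (R := R) n (n - 5))
   /\ (lambda1 (Gamma (R := R) n tau) = lambda1 (Gamma (R := R) n 0)
       <-> (tau = 0%N \/ tau = (n - 5)%N)))
  /\
  (* (ii) *)
  ((n%:R - 4 < lambda1 (Gamma (R := R) n 0))
   /\ is_largest_root
        ('X^3 - (n%:R - 6) *: 'X^2 - (3 * (n%:R - 4)) *: 'X
         - (n%:R - 3)%:P)
        (lambda1 (Gamma (R := R) n 0))).
Proof.
move=> Hn Ht.
have HN : (6 : R) <= n%:R by rewrite (ler_nat R 6 n).
have [l [Hl Hc Hmono]] := @cub_root R n Hn.
have Hpos : forall x, n%:R - 4 <= x -> l < x -> 0 < cub n%:R x.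
  by move=> x Hx Hlx; case: (Hmono x Hx) => _ /(_ Hlx).
have Hl0 : 0 < l by lra.
have L0 : lambda1 (Gamma (R:=R) n 0) = l.
  rewrite /lambda1; apply: sup_eq; first exact: eig_tau0.
  move=> a Ea; have [] := @eig_bound R n 0 l a Hn (leq0n _) Hl Hc Hpos Ea.
  by [].
have L5 : lambda1 (Gamma (R:=R) n (n - 5)) = l.
  rewrite /lambda1; apply: sup_eq; first exact: eig_tau5.
  move=> a Ea; have [] := @eig_bound R n (n - 5) l a Hn (leqnn _) Hl Hc Hpos Ea.
  by [].
have Lmid : (0 < tau)%N -> (tau < n - 5)%N -> lambda1 (Gamma (R:=R) n tau) < l.
  move=> Ht1 Ht2; rewrite /lambda1.
  apply: (@sup_lt R _ (char_poly (Gamma (R:=R) n tau))) => //.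
  - exact/monic_neq0/char_poly_monic.
  - by move=> a Ea; rewrite -eigenvalue_root_char.
  - by move=> a Ea; have [_ ] := @eig_bound R n tau l a Hn Ht Hl Hc Hpos Ea; apply.
have Hcases : [\/ tau = 0%N, tau = (n - 5)%N | (0 < tau)%N && (tau < n - 5)%N].
  case: (eqVneq tau 0%N) => [->|H0]; first by constructor 1.
  case: (eqVneq tau (n - 5)%N) => [->|H5]; first by constructor 2.
  by constructor 3; apply/andP; split; lia.
rewrite L0 L5; split; last first.
  split; first exact: Hl.
  rewrite /is_largest_root; split.
    by rewrite /root -/(cpoly n) cpolyE Hc.
  move=> r; rewrite -/(cpoly n) /root cpolyE => /eqP Hr.
  rewrite leNgt; apply/negP => Hlr.
  by have := Hpos r (ltW (lt_trans Hl Hlr)) Hlr; rewrite Hr ltxx.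
split.
  case: Hcases => [->|->|/andP[H1 H2]]; rewrite ?L0 ?L5 //.
  exact: ltW (Lmid H1 H2).
split => //; split.
  case: Hcases => [->|->|/andP[H1 H2]]; [by left | by right |].
  by move=> E; move: (Lmid H1 H2); rewrite E ltxx.
by case=> ->; rewrite ?L0 ?L5.
Qed.
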